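(* Under the isomorphism $\iota$ of Lemma 3.1, the image of $\mathcal C^+(\mathrm{II}_{2,10})$ is $M_4(\mathcal C^+(-\mathbb O(\mathbb Z)))$.
   Context: Clifford algebras: for a real quadratic space $(W,q)$, $(a,b)=q(a+b)-q(a)-q(b)$, $\mathcal C(W)$ is generated by $W$ with $ab+ba=(a,b)$, $\mathcal C^+(W)$ its even part; for a lattice $L\subset W$, $\mathcal C^+(L)$ is the subring generated by all products $ab$, $a,b\in L$. $V=\mathbb R^{12}$ with basis $h_1,\dots,h_4,e_0,\dots,e_7$, $(h_1,h_2)=(h_3,h_4)=1$, other pairings among the $h_i$ zero, $(h_i,e_k)=0$, $(e_k,e_l)=-2\delta_{kl}$, $q(x)=(x,x)/2$. $V_0=\sum\mathbb Re_k$ is identified with the octaves $\mathbb O=\mathbb R^8$ (standard basis $e_0,\dots,e_7$) with quadratic form $-N$, $N(x)=\sum x_k^2$. Integral octaves $\mathbb O(\mathbb Z)=\sum\mathbb Zf_i$ with $f_0=e_0,f_1=e_1,f_2=e_2,f_3=e_3$, $f_4=\frac12(e_1+e_2+e_3-e_4)$, $f_5=\frac12(-e_0-e_1-e_4+e_5)$, $f_6=\frac12(-e_0+e_1-e_2+e_6)$, $f_7=\frac12(-e_0+e_2+e_4+e_7)$; $-\mathbb O(\mathbb Z)$ denotes this lattice in $V_0$. $\mathrm{II}_{2,10}=\mathbb Zh_1+\mathbb Zh_2+\mathbb Zh_3+\mathbb Zh_4+\mathbb O(\mathbb Z)\subset V$. $\iota:\mathcal C(V)\to M_4(\mathcal C(V_0))$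 is the algebra isomorphism with $\iota(h_1)=e_0(E_{12}+E_{43})$, $\iota(h_2)=e_0(-E_{21}-E_{34})$, $\iota(h_3)=e_0(E_{14}-E_{23})$, $\iota(h_4)=e_0(E_{32}-E_{41})$, $\iota(e_0)=e_0\mathrm{diag}(-1,1,-1,1)$, $\iota(e_i)=e_iE_4$ ($1\le i\le7$), $E_{kl}$ the matrix units. *)

(* Defs.v *)
From HB Require Import structures.
From mathcomp Require Import all_boot all_order all_algebra.
Set Implicit Arguments. Unset Strict Implicit. Unset Printing Implicit Defensive.
Import Order.TTheory GRing.Theory Num.Theory.
Local Open Scope ring_scope.

Section Cliff.
Variable R : realFieldType.

(* An element is the family of its coordinates on the monomial basis
   e_S = e_{i_1} ... e_{i_k}  (i_1 < ... < i_k, S = {i_1,...,i_k}).            *)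
Definition cl := {ffun {set 'I_8} -> R}.

Definition cl_one : cl := [ffun S => (S == set0)%:R].

(* sign of e_S e_T = sign * e_{S Δ T}: one factor -1 per inversion, one factor
   e_k^2 = -1 per common index. *)
Definition cl_sign (S T : {set 'I_8}) : R :=
  (-1) ^+ (#|[set p : 'I_8 * 'I_8 | [&& p.1 \in S, p.2 \in T & (p.2 < p.1)%N]]|
           + #|S :&: T|).

Definition cl_mul (x y : cl) : cl :=
  [ffun U => \sum_(S : {set 'I_8}) \sum_(T : {set 'I_8} | (S :\: T) :|: (T :\: S) == U)
               cl_sign S T * x S * y T].

Definition cl_scale (c : R) (x : cl) : cl := [ffun S => c * x S].

Definition cl_gen (k : nat) : cl := [ffun S => (S == [set (inord k : 'I_8)])%:R].

Definition cl_vec (v : 'rV[R]_8) : cl :=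
  [ffun S => \sum_(k : 'I_8) (if S == [set k] then v 0 k else 0)].

(* twice the coordinates of f_i on e_0,...,e_7 *)
Definition fcoef2 : seq (seq int) :=
  [:: [:: 2; 0; 0; 0; 0; 0; 0; 0];
      [:: 0; 2; 0; 0; 0; 0; 0; 0];
      [:: 0; 0; 2; 0; 0; 0; 0; 0];
      [:: 0; 0; 0; 2; 0; 0; 0; 0];
      [:: 0; 1; 1; 1; -1; 0; 0; 0];
      [:: -1; -1; 0; 0; -1; 1; 0; 0];
      [:: -1; 1; -1; 0; 0; 0; 1; 0];
      [:: -1; 0; 1; 0; 1; 0; 0; 1] ].

Definition fcoef (i k : nat) : R := (nth 0 (nth [::] fcoef2 i) k)%:~R / 2%:R.

Definition Fmx : 'M[R]_8 := \matrix_(i, k) fcoef i k.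

Definition OZ (v : 'rV[R]_8) : Prop :=
  exists n : 'I_8 -> int, v = \sum_i (n i)%:~R *: row i Fmx.

(* ---------- V = R^12, basis h_1..h_4, e_0..e_7 (coordinates 0..3, 4..11) ---------- *)
(* rows: h_1..h_4, f_0..f_7 *)
Definition LBmx : 'M[R]_12 :=
  \matrix_(i, j) (if (i < 4)%N then ((i : nat) == j)%:R
                  else if (j < 4)%N then 0 else fcoef (i - 4) (j - 4)).

Definition II210 (x : 'rV[R]_12) : Prop :=
  exists n : 'I_12 -> int, x = \sum_i (n i)%:~R *: row i LBmx.

Definition mx_mul (A B : 'M[cl]_4) : 'M[cl]_4 :=
  \matrix_(i, j) \sum_(k : 'I_4) cl_mul (A i k) (B k j).
Definition mx_one : 'M[cl]_4 := \matrix_(i, j) (if i == j then cl_one else 0).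
Definition mx_scale (c : R) (A : 'M[cl]_4) : 'M[cl]_4 := map_mx (cl_scale c) A.

(* (a,b) entry (0-based) of iota(b_i), b_0..b_3 = h_1..h_4, b_4..b_11 = e_0..e_7 *)
Definition iota_entry (i a b : nat) : cl :=
  let e0 := cl_gen 0 in
  match i with
  | 0 => if ((a == 0)%N && (b == 1)%N) || ((a == 3)%N && (b == 2)%N) then e0 else 0
  | 1 => if ((a == 1)%N && (b == 0)%N) || ((a == 2)%N && (b == 3)%N) then - e0 else 0
  | 2 => if (a == 0)%N && (b == 3)%N then e0
         else if (a == 1)%N && (b == 2)%N then - e0 else 0
  | 3 => if (a == 2)%N && (b == 1)%N then e0
         else if (a == 3)%N && (b == 0)%N then - e0 else 0
  | 4 => if a == b then (if odd a then e0 else - e0) else 0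
  | _ => if a == b then cl_gen (i - 4)%N else 0
  end.

Definition iota_gen (i : 'I_12) : 'M[cl]_4 := \matrix_(a, b) iota_entry i a b.

(* iota restricted to V (it determines the algebra map iota on C(V)) *)
Definition iotaV (x : 'rV[R]_12) : 'M[cl]_4 := \sum_i mx_scale (x 0 i) (iota_gen i).

End Cliff.

Inductive subring_gen {T : Type} (one : T) (add mul : T -> T -> T) (opp : T -> T)
    (S : T -> Prop) : T -> Prop :=
  | sg_base x : S x -> subring_gen one add mul opp S x
  | sg_one : subring_gen one add mul opp S one
  | sg_add x y : subring_gen one add mul opp S x -> subring_gen one add mul opp S y ->
                 subring_gen one add mul opp S (add x y)
  | sg_opp x : subring_gen one add mul opp S x -> subring_gen one add mul opp S (opp x)
  | sg_mul x y : subring_gen one add mul opp S x -> subring_gen one add mul opp S y ->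
                 subring_gen one add mul opp S (mul x y).

Definition Cplus_OZ (R : realFieldType) : cl R -> Prop :=
  subring_gen (cl_one R) +%R (@cl_mul R) -%R
    (fun z => exists a b, OZ a /\ OZ b /\ z = cl_mul (cl_vec a) (cl_vec b)).

(* iota(C^+(II_{2,10})) = subring of M_4(C(V_0)) generated by iota(a) iota(b), a,b in II_{2,10} *)
Definition iota_Cplus_II (R : realFieldType) : 'M[cl R]_4 -> Prop :=
  subring_gen (mx_one R) +%R (@mx_mul R) -%R
    (fun Z => exists x y, II210 x /\ II210 y /\ Z = mx_mul (iotaV x) (iotaV y)).

(* Main.v *)
Require Import Defs.
From HB Require Import structures.
From mathcomp Require Import all_boot all_order all_algebra.
From mathcomp Require Import ring.
Set Implicit Arguments. Unset Strict Implicit. Unset Printing Implicit Defensive.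
Import Order.TTheory GRing.Theory Num.Theory.
Local Open Scope ring_scope.



Section S.
Variable R : realFieldType.
Local Notation cl := (cl R).

Definition clb (S0 : {set 'I_8}) : cl := [ffun U => (U == S0)%:R].

Lemma cl_mulDl (x y z : cl) : cl_mul (x + y) z = cl_mul x z + cl_mul y z.
Proof.
apply/ffunP=> U; rewrite !ffunE -big_split; apply: eq_bigr => S _.
rewrite -big_split; apply: eq_bigr => T _; rewrite !ffunE; by rewrite mulrDr mulrDl.
Qed.

Lemma cl_mulDr (x y z : cl) : cl_mul x (y + z) = cl_mul x y + cl_mul x z.
Proof.
apply/ffunP=> U; rewrite !ffunE -big_split; apply: eq_bigr => S _.
rewrite -big_split; apply: eq_bigr => T _; rewrite !ffunE; by rewrite mulrDr.
Qed.

Lemma cl_mulNl (x z : cl) : cl_mul (- x) z = - cl_mul x z.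
Proof.
apply/ffunP=> U; rewrite !ffunE -sumrN; apply: eq_bigr => S _.
rewrite -sumrN; apply: eq_bigr => T _; rewrite !ffunE; by rewrite mulrN mulNr.
Qed.

Lemma cl_mulNr (x z : cl) : cl_mul x (- z) = - cl_mul x z.
Proof.
apply/ffunP=> U; rewrite !ffunE -sumrN; apply: eq_bigr => S _.
rewrite -sumrN; apply: eq_bigr => T _; rewrite !ffunE; by rewrite mulrN.
Qed.

Lemma cl_mul0l (z : cl) : cl_mul 0 z = 0.
Proof.
apply/ffunP=> U; rewrite !ffunE big1 // => S _; rewrite big1 // => T _.
by rewrite ffunE mulr0 mul0r.
Qed.

Lemma cl_mul0r (z : cl) : cl_mul z 0 = 0.
Proof.
apply/ffunP=> U; rewrite !ffunE big1 // => S _; rewrite big1 // => T _.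
by rewrite ffunE mulr0.
Qed.

Lemma cl_sign0l T : cl_sign R set0 T = 1 :> R.
Proof.
rewrite /cl_sign set0I cards0 addn0.
suff -> : [set p : 'I_8 * 'I_8 | [&& p.1 \in set0, p.2 \in T & (p.2 < p.1)%N]] = set0.
  by rewrite cards0 expr0.
by apply/setP => p; rewrite !inE.
Qed.

Lemma cl_sign0r T : cl_sign R T set0 = 1 :> R.
Proof.
rewrite /cl_sign setI0 cards0 addn0.
suff -> : [set p : 'I_8 * 'I_8 | [&& p.1 \in T, p.2 \in set0 & (p.2 < p.1)%N]] = set0.
  by rewrite cards0 expr0.
by apply/setP => p; rewrite !inE andbF.
Qed.

Lemma cl_mul_basis S0 T0 :
  cl_mul (clb S0) (clb T0) =
  [ffun U => cl_sign R S0 T0 * (U == (S0 :\: T0) :|: (T0 :\: S0))%:R].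
Proof.
apply/ffunP=> U; rewrite !ffunE (bigD1 S0) //= [X in _ + X = _]big1 ?addr0; last first.
  by move=> S /negbTE SS; rewrite big1 // => T _; rewrite ffunE SS mulr0 mul0r.
rewrite big_mkcond (bigD1 T0) //= [X in _ + X = _]big1 ?addr0; last first.
  by move=> T /negbTE TT; rewrite !ffunE TT mulr0; case: ifP.
rewrite !ffunE !eqxx mulr1 mulr1 eq_sym; case: ifP => _; by rewrite ?mulr0 ?mulr1.
Qed.

Lemma cl_mul1l (x : cl) : cl_mul (cl_one R) x = x.
Proof.
apply/ffunP=> U; rewrite !ffunE (bigD1 set0) //= [X in _ + X = _]big1 ?addr0; last first.
  by move=> S /negbTE SS; rewrite big1 // => T _; rewrite ffunE SS mulr0 mul0r.
rewrite (big_pred1 U); last by move=> T; rewrite set0D setD0 set0U.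
by rewrite ffunE eqxx cl_sign0l !mul1r.
Qed.

Lemma cl_mul1r (x : cl) : cl_mul x (cl_one R) = x.
Proof.
apply/ffunP=> U; rewrite !ffunE (bigD1 U) //= [X in _ + X = _]big1 ?addr0; last first.
  move=> S SU; rewrite big1 // => T /eqP TU; rewrite ffunE.
  case: eqP => [T0|]; last by rewrite mulr0.
  by move: TU SU; rewrite T0 setD0 set0D setU0 => ->; rewrite eqxx.
rewrite (bigD1 set0) /=; last by rewrite setD0 set0D setU0.
rewrite [X in _ + X = _]big1 ?addr0; last by move=> T /andP[_ /negbTE TT]; rewrite ffunE TT mulr0.
by rewrite ffunE eqxx cl_sign0r !mulr1 mul1r.
Qed.

Lemma cl_gen_clb k : (k < 8)%N -> cl_gen R k = clb [set inord k].
Proof. by []. Qed.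

Lemma cl_gen0_sq : cl_mul (cl_gen R 0) (cl_gen R 0) = - cl_one R.
Proof.
rewrite /cl_gen -/(clb _) cl_mul_basis setDv setU0.
apply/ffunP => U; rewrite !ffunE.
have -> : cl_sign R [set inord 0 : 'I_8] [set inord 0] = -1 :> R.
  rewrite /cl_sign setIid cards1.
  suff -> : [set p : 'I_8 * 'I_8 | [&& p.1 \in [set inord 0], p.2 \in [set inord 0] & (p.2 < p.1)%N]] = set0.
    by rewrite cards0 expr1.
  by apply/setP => p; rewrite !inE; case: p => a b /=; apply/and3P => -[/eqP -> /eqP -> ]; rewrite ltnn.
by rewrite mulN1r.
Qed.

End S.



Ltac mxcomp :=
  apply/matrixP; case=> [[|[|[|[|?]]]] ?]; try (by []);
  case=> [[|[|[|[|?]]]] ?]; try (by []);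
  rewrite !mxE !big_ord_recl big_ord0 !mxE /= /bump /=;
  rewrite ?cl_mul0l ?cl_mul0r ?cl_mulNl ?cl_mulNr ?cl_gen0_sq ?cl_mul1l ?opprK
     ?addr0 ?add0r ?oppr0 //;
  rewrite ?cl_mul0l ?cl_mul0r ?cl_mul1l ?addr0 ?add0r //.

Section S.

Variable R : realFieldType.
Local Notation cl := (cl R).
Local Notation e0 := (cl_gen R 0).
Local Notation c1 := (cl_one R).

Definition mxu (i j : 'I_4) (c : cl) : 'M[cl]_4 :=
  \matrix_(a, b) if (a == i) && (b == j) then c else 0.

Definition o0 : 'I_4 := @Ordinal 4 0 isT.
Definition o1 : 'I_4 := @Ordinal 4 1 isT.
Definition o2 : 'I_4 := @Ordinal 4 2 isT.
Definition o3 : 'I_4 := @Ordinal 4 3 isT.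
Definition j0 : 'I_12 := @Ordinal 12 0 isT.
Definition j1 : 'I_12 := @Ordinal 12 1 isT.
Definition j2 : 'I_12 := @Ordinal 12 2 isT.
Definition j3 : 'I_12 := @Ordinal 12 3 isT.
Definition j4 : 'I_12 := @Ordinal 12 4 isT.
Notation ig := (iota_gen R).

Lemma mxu_mul i k j c d : mx_mul (mxu i k c) (mxu k j d) = mxu i j (cl_mul c d).
Proof.
apply/matrixP => a b; rewrite !mxE (bigD1 k) //= [X in _ + X = _]big1 ?addr0.
  rewrite !mxE !eqxx andbT; case: (a == i); case: (b == j);
  by rewrite ?cl_mul0l ?cl_mul0r.
by move=> l /negbTE lk; rewrite !mxE lk andbF cl_mul0l.
Qed.

Lemma mxuD i j c d : mxu i j c + mxu i j d = mxu i j (c + d).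
Proof. by apply/matrixP => a b; rewrite !mxE; case: ifP; rewrite ?addr0. Qed.

Lemma mxuN i j c : - mxu i j c = mxu i j (- c).
Proof. by apply/matrixP => a b; rewrite !mxE; case: ifP; rewrite ?oppr0. Qed.

Lemma mx_decomp (A : 'M[cl]_4) : A = \sum_(i < 4) \sum_(j < 4) mxu i j (A i j).
Proof.
apply/matrixP => a b; rewrite summxE (bigD1 a) //= [X in _ = _ + X]big1 ?addr0.
  rewrite summxE (bigD1 b) //= [X in _ = _ + X]big1 ?addr0.
    by rewrite mxE !eqxx.
  by move=> j jb; rewrite mxE (eq_sym b) (negbTE jb) andbF.
by move=> i ia; rewrite summxE big1 // => j _; rewrite mxE (eq_sym a) (negbTE ia).
Qed.

Lemma p01 : mx_mul (ig j0) (ig j1) = mxu o0 o0 c1 + mxu o3 o3 c1.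
Proof. mxcomp. Qed.
Lemma p10 : mx_mul (ig j1) (ig j0) = mxu o1 o1 c1 + mxu o2 o2 c1.
Proof. mxcomp. Qed.
Lemma p23 : mx_mul (ig j2) (ig j3) = mxu o0 o0 c1 + mxu o1 o1 c1.
Proof. mxcomp. Qed.
Lemma p32 : mx_mul (ig j3) (ig j2) = mxu o2 o2 c1 + mxu o3 o3 c1.
Proof. mxcomp. Qed.
Lemma p12 : mx_mul (ig j1) (ig j2) = mxu o1 o3 c1.
Proof. mxcomp. Qed.
Lemma p30 : mx_mul (ig j3) (ig j0) = mxu o3 o1 c1.
Proof. mxcomp. Qed.
Lemma p31 : mx_mul (ig j3) (ig j1) = mxu o2 o0 c1.
Proof. mxcomp. Qed.
Lemma p14 : mx_mul (ig j1) (ig j4) = mxu o1 o0 (- c1) + mxu o2 o3 c1.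
Proof. mxcomp. Qed.
Lemma p04 : mx_mul (ig j0) (ig j4) = mxu o0 o1 (- c1) + mxu o3 o2 c1.
Proof. mxcomp. Qed.
Lemma q11 : mx_mul (mxu o1 o1 c1 + mxu o2 o2 c1) (mxu o0 o0 c1 + mxu o1 o1 c1) = mxu o1 o1 c1.
Proof. mxcomp. Qed.

End S.



Section S.
Variable R : realFieldType.
Local Notation cl := (cl R).
Local Notation c1 := (cl_one R).
Local Notation ig := (iota_gen R).

Lemma two_neq0 : (2%:R : R) != 0.
Proof. by rewrite pnatr_eq0. Qed.

Lemma fcoef0 k : fcoef R 0 k = (k == 0)%:R.
Proof.
rewrite /fcoef; case: k => [|k].
  by rewrite /= divff // two_neq0.
rewrite /=; do 7 (case: k => [|k]; first by rewrite /= mul0r).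
by rewrite nth_default ?mul0r.
Qed.

Lemma row_LB_delta (j : 'I_12) : (j < 5)%N -> row j (LBmx R) = delta_mx 0 j.
Proof.
move=> j5; apply/matrixP => a c; rewrite !mxE (ord1 a) eqxx /= -val_eqE /=.
case: ifP => j4; first by rewrite eq_sym.
have -> : (j : nat) = 4%N by apply/eqP; rewrite eqn_leq -ltnS j5 leqNgt j4.
case: ifP => c4.
  by case: eqP c4 => // ->.
by rewrite fcoef0 subn_eq0 eqn_leq (leqNgt 4) c4 andbT.
Qed.

Lemma II210_delta (j : 'I_12) : (j < 5)%N -> II210 (delta_mx 0 j : 'rV[R]_12).
Proof.
move=> j5; exists (fun i => (i == j)%:Z); rewrite (bigD1 j) //= big1 ?addr0.
  by rewrite eqxx scale1r row_LB_delta.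
by move=> i /negbTE ij; rewrite ij scale0r.
Qed.

Lemma iotaV_delta (j : 'I_12) : iotaV (delta_mx 0 j : 'rV[R]_12) = ig j.
Proof.
rewrite /iotaV (bigD1 j) //= big1 ?addr0.
  apply/matrixP => a b; rewrite !mxE; apply/ffunP => S; by rewrite ffunE !eqxx mul1r.
move=> i /negbTE ij; apply/matrixP => a b; rewrite !mxE ij /=; apply/ffunP => S.
by rewrite !ffunE mul0r.
Qed.

Local Notation SS := (@iota_Cplus_II R).

Lemma gen_in (j k : 'I_12) : (j < 5)%N -> (k < 5)%N -> SS (mx_mul (ig j) (ig k)).
Proof.
move=> j5 k5; apply: sg_base; exists (delta_mx 0 j), (delta_mx 0 k).
by rewrite !iotaV_delta; split; [apply: II210_delta|split; [apply: II210_delta|]].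
Qed.

Lemma SS_mul A B : SS A -> SS B -> SS (mx_mul A B).
Proof. exact: sg_mul. Qed.
Lemma SS_add A B : SS A -> SS B -> SS (A + B).
Proof. exact: sg_add. Qed.
Lemma SS_opp A : SS A -> SS (- A).
Proof. exact: sg_opp. Qed.
Lemma SS0 : SS 0.
Proof. by rewrite -(subrr (mx_one R)); apply: SS_add; [apply: sg_one|apply: SS_opp; apply: sg_one]. Qed.

Lemma units_in i j : SS (mxu i j c1).
Proof.
have E11 : SS (mxu o1 o1 c1) by rewrite -q11 -p10 -p23; apply: SS_mul; apply: gen_in.
have E00 : SS (mxu o0 o0 c1).
  have <- : mx_mul (mxu o0 o0 c1 + mxu o3 o3 c1) (mxu o0 o0 c1 + mxu o1 o1 c1) = mxu o0 o0 c1 by mxcomp.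
  by rewrite -p01 -p23; apply: SS_mul; apply: gen_in.
have E33 : SS (mxu o3 o3 c1).
  have <- : mx_mul (mxu o0 o0 c1 + mxu o3 o3 c1) (mxu o2 o2 c1 + mxu o3 o3 c1) = mxu o3 o3 c1 by mxcomp.
  by rewrite -p01 -p32; apply: SS_mul; apply: gen_in.
have E10 : SS (mxu o1 o0 c1).
  have <- : - mx_mul (mxu o1 o1 c1) (mxu o1 o0 (- c1) + mxu o2 o3 c1) = mxu o1 o0 c1.
    by apply/eqP; rewrite eqr_oppLR; apply/eqP; mxcomp.
  by rewrite -p14; apply: SS_opp; apply: SS_mul => //; apply: gen_in.
have E01 : SS (mxu o0 o1 c1).
  have <- : - mx_mul (mxu o0 o0 c1) (mxu o0 o1 (- c1) + mxu o3 o2 c1) = mxu o0 o1 c1.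
    by apply/eqP; rewrite eqr_oppLR; apply/eqP; mxcomp.
  by rewrite -p04; apply: SS_opp; apply: SS_mul => //; apply: gen_in.
have E32 : SS (mxu o3 o2 c1).
  have <- : mx_mul (mxu o3 o3 c1) (mxu o0 o1 (- c1) + mxu o3 o2 c1) = mxu o3 o2 c1 by mxcomp.
  by rewrite -p04; apply: SS_mul => //; apply: gen_in.
have E13 : SS (mxu o1 o3 c1) by rewrite -p12; apply: gen_in.
have E31 : SS (mxu o3 o1 c1) by rewrite -p30; apply: gen_in.
have E20 : SS (mxu o2 o0 c1) by rewrite -p31; apply: gen_in.
have E12 : SS (mxu o1 o2 c1) by rewrite -(cl_mul1l c1) -(mxu_mul o1 o3); apply: SS_mul.
have E21 : SS (mxu o2 o1 c1) by rewrite -(cl_mul1l c1) -(mxu_mul o2 o0); apply: SS_mul.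
have Ei1 : SS (mxu i o1 c1).
  by case: i => [[|[|[|[|i]]]] Hi] //; rewrite (_ : Ordinal Hi = _) //; apply/val_inj.
have E1j : SS (mxu o1 j c1).
  by case: j => [[|[|[|[|j]]]] Hj] //; rewrite (_ : Ordinal Hj = _) //; apply/val_inj.
by rewrite -(cl_mul1l c1) -(mxu_mul i o1); apply: SS_mul.
Qed.

End S.



Definition epsz (i a b : nat) : int :=
  match i with
  | 0 => if ((a == 0) && (b == 1)) || ((a == 3) && (b == 2)) then 1 else 0
  | 1 => if ((a == 1) && (b == 0)) || ((a == 2) && (b == 3)) then -1 else 0
  | 2 => if (a == 0) && (b == 3) then 1 else if (a == 1) && (b == 2) then -1 else 0
  | 3 => if (a == 2) && (b == 1) then 1 else if (a == 3) && (b == 0) then -1 else 0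
  | _ => 0
  end.

Section S.
Variable R : realFieldType.
Local Notation cl := (cl R).
Local Notation e0 := (cl_gen R 0).

Lemma iota_entry_h (i : nat) a b S : (i < 4)%N ->
  iota_entry R i a b S = (epsz i a b)%:~R * e0 S.
Proof.
case: i => [|[|[|[|i]]]] //= _; repeat case: ifP => _; rewrite ?ffunE ?mul1r ?mul0r //.
all: by rewrite (_ : (-1)%:~R = -1 :> R) // mulN1r.
Qed.

Lemma iota_entry_hl (i : 'I_4) a b S :
  iota_entry R (lshift 8 i) a b S = (epsz i a b)%:~R * e0 S.
Proof. apply: iota_entry_h; exact: (ltn_ord i). Qed.

Lemma sum12 (F : 'I_12 -> R) :
  \sum_(i < 12) F i = \sum_(i < 4) F (lshift 8 i) + \sum_(k < 8) F (rshift 4 k).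
Proof. exact: (@big_split_ord R 0 +%R 4 8 xpredT F). Qed.

Lemma iota_entry_e (k : 'I_7) a b :
  iota_entry R (rshift 4 (lift ord0 k)) a b = if a == b then cl_gen R k.+1 else 0.
Proof. by rewrite /= addKn /bump leq0n add1n. Qed.

Lemma iota_entry_4 a b :
  iota_entry R (rshift 4 (@ord0 7)) a b = if a == b then (if odd a then e0 else - e0) else 0.
Proof. by []. Qed.

Lemma epsz_diag (i a : 'I_4) : epsz i a a = 0.
Proof. by case: i => [[|[|[|[|i]]]] Hi] //; case: a => [[|[|[|[|a]]]] Ha]. Qed.

Definition W (x : 'rV[R]_12) (a b : 'I_4) : 'rV[R]_8 :=
  if a == b then \row_k ((if ((k : nat) == 0%N) && ~~ odd a then -1 else 1) * x 0 (rshift 4 k))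
  else (\sum_(i < 4) x 0 (lshift 8 i) * (epsz i a b)%:~R) *: delta_mx 0 0.

Lemma inord0_8 : (inord 0 : 'I_8) = ord0.
Proof. by apply/val_inj; rewrite /= inordK. Qed.

Lemma inordS_8 (k : 'I_7) : (inord k.+1 : 'I_8) = lift ord0 k.
Proof. apply/val_inj; rewrite /= inordK //. by rewrite ltnS ltn_ord. Qed.

Lemma iotaV_entry x a b : iotaV x a b = cl_vec (W x a b).
Proof.
apply/ffunP => S; rewrite /iotaV summxE sum_ffunE ffunE.
under eq_bigr => i _ do rewrite !mxE ffunE.
rewrite sum12 [X in _ + X]big_ord_recl.
under eq_bigr => i _ do rewrite iota_entry_hl.
under [X in _ + (_ + X) = _]eq_bigr => i _ do rewrite iota_entry_e.
rewrite iota_entry_4 /W -val_eqE /=.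
case: eqP => [<-|ab].
  rewrite ?eqxx big1 ?add0r; last by move=> i _; rewrite epsz_diag mul0r mulr0.
  rewrite [in RHS]big_ord_recl !mxE /=; congr (_ + _).
    case: (odd a); rewrite /= ?ffunE inord0_8; case: (S == _);
    by rewrite /= ?mulr1n ?mulr0n ?mulrN ?mulr1 ?mulr0 ?mul1r ?mulN1r ?oppr0.
  apply: eq_bigr => i _; rewrite !mxE /= ffunE inordS_8 mul1r.
  by case: (S == _); rewrite ?mulr1 ?mulr0.
have Z0 : (0 : cl) S = 0 by rewrite ffunE.
rewrite Z0 mulr0 add0r [X in _ + X = _]big1 ?addr0; last by move=> i _; rewrite mulr0.
rewrite [in RHS]big_ord_recl [X in _ = _ + X]big1 ?addr0; last first.
  by move=> i _; rewrite !mxE /= mulr0; case: ifP.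
under eq_bigr => i _ do rewrite mulrA.
rewrite -mulr_suml !mxE /= ffunE inord0_8.
by case: (S == _); rewrite ?mulr1n ?mulr0n ?mulr1 ?mulr0.
Qed.
End S.



Section S.
Variable R : realFieldType.
Local Notation LB := (LBmx R).
Local Notation F := (Fmx R).

Lemma sum12V (V : nmodType) (G : 'I_12 -> V) :
  \sum_(i < 12) G i = \sum_(i < 4) G (lshift 8 i) + \sum_(k < 8) G (rshift 4 k).
Proof. exact: (@big_split_ord V 0 +%R 4 8 xpredT G). Qed.

Lemma LB_ll (j i : 'I_4) : LB (lshift 8 j) (lshift 8 i) = (j == i)%:R.
Proof. by rewrite mxE /= ltn_ord. Qed.

Lemma LB_lr (j : 'I_4) (k : 'I_8) : LB (lshift 8 j) (rshift 4 k) = 0.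
Proof.
rewrite mxE /= ltn_ord; case: eqP => // E.
by have := ltn_ord j; rewrite E ltnNge leq_addr.
Qed.

Lemma LB_rl (i : 'I_8) (j : 'I_4) : LB (rshift 4 i) (lshift 8 j) = 0.
Proof. by rewrite mxE /= ltn_ord. Qed.

Lemma LB_rr (i k : 'I_8) : LB (rshift 4 i) (rshift 4 k) = fcoef R i k.
Proof. by rewrite mxE /= !addKn. Qed.

Lemma vec_entry n m (c : 'I_n -> R) (M : 'M[R]_(n, m)) (k : 'I_m) :
  (\sum_i c i *: row i M) 0 k = \sum_i c i * M i k.
Proof. by rewrite summxE; apply: eq_bigr => i _; rewrite !mxE. Qed.

Lemma row0F : row 0 F = delta_mx 0 0.
Proof.
apply/matrixP => a k; rewrite !mxE (ord1 a) eqxx /= fcoef0.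
by rewrite -val_eqE.
Qed.

Lemma OZ_e0 (z : int) : OZ (z%:~R *: delta_mx 0 0 : 'rV[R]_8).
Proof.
exists (fun i => if i == 0 then z else 0); rewrite (bigD1 0) //= big1 ?addr0.
  by rewrite row0F.
by move=> i /negbTE ->; rewrite scale0r.
Qed.

Lemma OZ_refl (v : 'rV[R]_8) : OZ v ->
  OZ (\row_k ((if (k : nat) == 0%N then -1 else 1) * v 0 k)).
Proof.
case=> n ->.
pose m : int := \sum_i n i * nth 0 (nth [::] fcoef2 i) 0.
exists (fun i => n i - (i == 0)%:Z * m).
apply/matrixP => a k; rewrite (ord1 a) mxE !vec_entry.
have Em : m%:~R = 2%:R * \sum_i (n i)%:~R * fcoef R i 0 :> R.
  rewrite /m rmorph_sum mulr_sumr; apply: eq_bigr => i _.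
  rewrite rmorphM /= /fcoef; by field.
under [RHS]eq_bigr => i _ do rewrite rmorphB rmorphM /= mulrBl.
rewrite sumrB [X in _ - X](bigD1 0) //= [X in _ - (_ + X)]big1 ?addr0; last first.
  by move=> i /negbTE ->; rewrite mul0r mul0r.
rewrite [F 0 k]mxE fcoef0 (_ : (1%Z)%:~R = 1 :> R) // mul1r.
case: (k =P 0 :> nat) => [k0|k0].
  rewrite (_ : k = 0); last by apply/val_inj.
  under eq_bigr => i _ do rewrite mxE.
  rewrite /= Em; set V := \sum_i _; ring.
by rewrite mul1r mulr0n mulr0 subr0.
Qed.

Lemma II210_coords (x : 'rV[R]_12) n : x = \sum_j (n j)%:~R *: row j LB ->
  (forall i : 'I_4, x 0 (lshift 8 i) = (n (lshift 8 i))%:~R) /\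
  \row_k x 0 (rshift 4 k) = \sum_i (n (rshift 4 i))%:~R *: row i F.
Proof.
move=> ->; split.
  move=> i; rewrite vec_entry sum12 [X in _ + X]big1 ?addr0; last first.
    by move=> k _; rewrite LB_rl mulr0.
  rewrite (bigD1 i) //= big1 ?addr0; first by rewrite LB_ll eqxx mulr1.
  by move=> j /negbTE ji; rewrite LB_ll ji mulr0.
apply/matrixP => a k; rewrite mxE !vec_entry sum12 big1 ?add0r; last first.
  by move=> j _; rewrite LB_lr mulr0.
by rewrite (ord1 a) vec_entry; apply: eq_bigr => i _; rewrite LB_rr mxE.
Qed.

Lemma W_OZ (x : 'rV[R]_12) a b : II210 x -> OZ (W x a b).
Proof.
case=> n Ex; have [X1 X2] := II210_coords Ex.
rewrite /W; case: (a =P b) => [ab|ab]; first subst b.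
  case Ho: (odd a).
    have -> : \row_k ((if ((k : nat) == 0%N) && ~~ true then -1 else 1) * x 0 (rshift 4 k))
        = \row_k x 0 (rshift 4 k) :> 'rV[R]_8.
      by apply/matrixP => i k; rewrite !mxE andbF mul1r.
    by rewrite X2; eexists; reflexivity.
  have -> : \row_k ((if ((k : nat) == 0%N) && ~~ false then -1 else 1) * x 0 (rshift 4 k))
      = \row_k ((if (k : nat) == 0%N then -1 else 1) * (\row_k x 0 (rshift 4 k)) 0 k) :> 'rV[R]_8.
    by apply/matrixP => i k; rewrite !mxE andbT.
  by apply: OZ_refl; rewrite X2; eexists; reflexivity.
under eq_bigr => i _ do rewrite X1 -rmorphM.
by rewrite -rmorph_sum; apply: OZ_e0.
Qed.

Lemma emb_OZ (v : 'rV[R]_8) : OZ v -> exists x, II210 x /\ W x o1 o1 = v /\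
  forall b, b != o1 -> W x o1 b = 0.
Proof.
case=> n Ev.
pose x : 'rV[R]_12 := \sum_i (n i)%:~R *: row (rshift 4 i) LB.
have Xl : forall j : 'I_4, x 0 (lshift 8 j) = 0.
  by move=> j; rewrite summxE big1 // => i _; rewrite 2!mxE LB_rl mulr0.
have Xr : forall k : 'I_8, x 0 (rshift 4 k) = v 0 k.
  move=> k; rewrite summxE Ev vec_entry; apply: eq_bigr => i _.
  by rewrite 2!mxE LB_rr mxE.
exists x; split.
  exists (fun j : 'I_12 => if (j < 4)%N then 0 else n (inord (j - 4))).
  rewrite sum12V big1 ?add0r; last by move=> i _; rewrite /= ltn_ord scale0r.
  by apply: eq_bigr => i _; rewrite /= addKn inord_val.
split.
  rewrite /W eqxx; apply/matrixP => a k; rewrite !mxE /=. by rewrite andbF mul1r Xr (ord1 a).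
move=> b /negbTE b1; rewrite /W eq_sym b1 big1 ?scale0r // => i _.
by rewrite Xl mul0r.
Qed.

End S.



Section S.
Variable R : realFieldType.
Local Notation cl := (cl R).
Local Notation c1 := (cl_one R).
Local Notation CP := (@Cplus_OZ R).
Local Notation SS := (@iota_Cplus_II R).

Lemma CP0 : CP 0.
Proof. by rewrite -(subrr c1); apply: sg_add; [apply: sg_one|apply: sg_opp; apply: sg_one]. Qed.

Lemma CP_sum (I : finType) (F : I -> cl) : (forall i, CP (F i)) -> CP (\sum_i F i).
Proof. by move=> H; apply: big_ind => //; [exact: CP0|move=> u v; apply: sg_add]. Qed.

Lemma cl_vec0 : cl_vec (0 : 'rV[R]_8) = 0.
Proof. by apply/ffunP => S; rewrite !ffunE big1 // => k _; rewrite mxE; case: ifP. Qed.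

Lemma key (X Y : 'M[cl]_4) :
  (forall k, k != o1 -> X o1 k = 0) -> (forall k, k != o1 -> Y o1 k = 0) ->
  mx_mul (mxu o1 o1 c1) (mx_mul X Y) = mxu o1 o1 (cl_mul (X o1 o1) (Y o1 o1)).
Proof.
move=> HX HY; apply/matrixP => a b; rewrite !mxE (bigD1 o1) //= [X in _ + X]big1 ?addr0;
  last by move=> k kn; rewrite mxE (negbTE kn) andbF cl_mul0l.
rewrite !mxE eqxx andbT; case: (a == o1); last by rewrite cl_mul0l.
rewrite cl_mul1l (bigD1 o1) //= [X in _ + X]big1 ?addr0;
  last by move=> k /HX ->; rewrite cl_mul0l.
by case: eqP => [->|/eqP bo]; rewrite ?eqxx // HY ?cl_mul0r // eq_sym.
Qed.

Lemma fwd (A : 'M[cl]_4) : SS A -> forall i j, CP (A i j).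
Proof.
elim=> {A} [Z [x [y [Hx [Hy ->]]]] | | A B _ IHA _ IHB | A _ IHA | A B _ IHA _ IHB] i j.
- rewrite mxE; apply: CP_sum => k; apply: sg_base.
  exists (W x i k), (W y k j); rewrite !iotaV_entry; split; first exact: W_OZ.
  by split; first exact: W_OZ.
- by rewrite mxE; case: ifP => _; [apply: sg_one|apply: CP0].
- by rewrite mxE; apply: sg_add; [apply: IHA|apply: IHB].
- by rewrite mxE; apply: sg_opp; apply: IHA.
- by rewrite mxE; apply: CP_sum => k; apply: sg_mul; [apply: IHA|apply: IHB].
Qed.

Lemma bwd_units (c : cl) : CP c -> forall i j, SS (mxu i j c).
Proof.
elim=> {c} [z [a [b [Ha [Hb ->]]]] | | c d _ IHc _ IHd | c _ IHc | c d _ IHc _ IHd] i j.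
- have [x [Hx [Wx1 Wx0]]] := emb_OZ Ha.
  have [y [Hy [Wy1 Wy0]]] := emb_OZ Hb.
  have E : mxu o1 o1 (cl_mul (cl_vec a) (cl_vec b)) =
           mx_mul (mxu o1 o1 c1) (mx_mul (iotaV x) (iotaV y)).
    rewrite key; first by rewrite !iotaV_entry Wx1 Wy1.
      by move=> k k1; rewrite iotaV_entry Wx0 // cl_vec0.
    by move=> k k1; rewrite iotaV_entry Wy0 // cl_vec0.
  rewrite -[cl_mul _ _]cl_mul1l -(mxu_mul i o1) -[cl_mul (cl_vec a) _]cl_mul1r -(mxu_mul o1 o1).
  apply: SS_mul; first exact: units_in.
  apply: SS_mul; last exact: units_in.
  rewrite E; apply: SS_mul; first exact: units_in.
  by apply: sg_base; exists x, y.
- exact: units_in.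
- by rewrite -mxuD; apply: SS_add; [apply: IHc|apply: IHd].
- by rewrite -mxuN; apply: SS_opp; apply: IHc.
- by rewrite -(mxu_mul i o1); apply: SS_mul; [apply: IHc|apply: IHd].
Qed.

End S.

Theorem lemma5p1 (R : realFieldType) (A : 'M[cl R]_4) :
  iota_Cplus_II A <-> (forall i j, Cplus_OZ (A i j)).
Proof.
split; first exact: fwd.
move=> H; rewrite (mx_decomp A).
apply: big_ind; [exact: SS0 | move=> u v; exact: SS_add|] => i _.
apply: big_ind; [exact: SS0 | move=> u v; exact: SS_add|] => j _.
exact: bwd_units.
Qed.
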